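(* Fix $\alpha\in(0,\tfrac12)$ and run Algorithm 2 (described in the context) with parameter $\alpha$ on any instance of dynamic bin packing. Then at every time $t$, the algorithm has at most $\frac{1}{\alpha}\mathrm{OPT}_t+O(\log\rho)$ bins open, where $\rho$ is the maximum number of items simultaneously present in the system and the $O(\cdot)$ hides an absolute constant.
   Context: Dynamic bin packing: bins have capacity $1$; items arrive online at times $a_i\ge0$ with size $s_i\in[0,1]$ and (unknown at arrival) duration $d_i>0$, and depart at $a_i+d_i$. The load of a bin is the total size of its items; a bin is open while nonempty. $\mathrm{OPT}_t$ is the minimum number of unit bins needed to pack the items present at time $t$. FirstFit with a given ordering of bins places an item into the first bin in the order with enough remaining capacity, or opens a new bin. Algorithm 1 (parameters $\alpha, f$): each bin is labeled Bad or Good. When an item $i$ of size $s_i$ arrives: if there is a Bad bin with load $\le 1-s_i$, put $i$ there, and if its load becomes $\ge f$ relabel it Good; otherwise, if there is a Good bin with load $\le1-s_i$, put $i$ into any such bin; otherwise open a new bin for $i$, labeled Bad if its load is $<f$ and Good otherwise. When an item departs: if its bin was Good and now has load $<\alpha$, migrate all items remaining in that bin using FirstFit with bins ordered Bad bins, then Good bins, then new bins. Algorithm 2 (parameter $\alpha$): an item has class $c\in\{0,1,2,\dots\}$ if its size lies in $(2^{-(c+1)},2^{-c}]$. Initialize a guess $\tilde\rho=1$, an instance of Algorithm 1 for class $0$ with parameters $(\alpha,\tfrac12)$, and one junk bin. For each arriving item: if the current number of items in the system is $\ge\tilde\rho$, double $\tilde\rho$, initialize a new instance of Algorithm 1 for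 class $c=\log_2\tilde\rho$ with parameters $(\alpha,1-2^{-c})$, and open a new junk bin for this guess. Then, if the item's class $c$ satisfies $c<\log_2\tilde\rho$, assign it using the Algorithm 1 instance for class $c$ (each instance uses its own bins); otherwise assign it to the junk bin of the current guess $\tilde\rho$. *)

(* Defs.v *)
From HB Require Import structures.
From mathcomp Require Import all_boot all_order all_algebra.
From mathcomp Require Import all_classical all_reals all_analysis.
Set Implicit Arguments. Unset Strict Implicit. Unset Printing Implicit Defensive.
Import Order.TTheory GRing.Theory Num.Theory.
Local Open Scope ring_scope.

Section DBP.
Variable R : realType.
Variable n : nat.
Variables (a d sz : 'I_n -> R).
Variable alpha : R.

Definition present (t : R) (i : 'I_n) : bool := (a i <= t) && (t < a i + d i).

Definition packb (t : R) (k : nat) : bool :=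
  [exists h : {ffun 'I_n -> 'I_k},
     [forall b : 'I_k, (\sum_(i | present t i && (h i == b)) sz i) <= 1]].
Definition is_OPT (t : R) (k : nat) : Prop :=
  packb t k /\ forall k', packb t k' -> (k <= k')%N.

Definition is_rho (r : nat) : Prop :=
  (exists t, #|[set i | present t i]| = r) /\ (forall t, (#|[set i | present t i]| <= r)%N).

(* Bin identifiers: inl k = junk bin of the guess 2^k;
   inr (c, b) = bin number b of the Algorithm-1 instance for class c. *)
Definition binid := (nat + nat * nat)%type.

(* lab c b = true means bin (c,b) is labeled Good, false means Bad. *)
Record state := State {
  guess : nat;                 (* rho~ = 2 ^ guess *)
  pres : 'I_n -> bool;
  loc : 'I_n -> binid;
  lab : nat -> nat -> bool }.

Definition init_state : state :=
  State 0 (fun _ => false) (fun _ => inl 0%N) (fun _ _ => false).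

Definition is_open (S : state) (B : binid) : bool :=
  [exists i, pres S i && (loc S i == B)].
Definition load (S : state) (B : binid) : R :=
  \sum_(i | pres S i && (loc S i == B)) sz i.
Definition nopen (S : state) : nat :=
  size (undup [seq loc S i | i <- enum 'I_n & pres S i]).
Definition nitems (S : state) : nat := #|[set i | pres S i]|.

Definition put (S : state) (i : 'I_n) (B : binid) : state :=
  State (guess S) (fun j => if j == i then true else pres S j)
        (fun j => if j == i then B else loc S j) (lab S).
Definition remove (S : state) (i : 'I_n) : state :=
  State (guess S) (fun j => if j == i then false else pres S j) (loc S) (lab S).
Definition setlab (S : state) (c b : nat) (v : bool) : state :=
  State (guess S) (pres S) (loc S)
        (fun c' b' => if (c' == c) && (b' == b) then v else lab S c' b').
Definition setguess (S : state) (g : nat) : state :=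
  State g (pres S) (loc S) (lab S).

Definition is_class (x : R) (c : nat) : Prop :=
  (2^-1) ^+ c.+1 < x /\ x <= (2^-1) ^+ c.
Definition fpar (c : nat) : R := if c == 0%N then 2^-1 else 1 - (2^-1) ^+ c.

Definition add_inst (S : state) (i : 'I_n) (c b : nat) (f : R) : state :=
  let S' := put S i (inr (c, b)) in
  if is_open S (inr (c, b)) && lab S c b then S'
  else setlab S' c b (f <= load S' (inr (c, b))).

Definition inst_arrive (S : state) (i : 'I_n) (c : nat) (S' : state) : Prop :=
  let f := fpar c in
  (exists b, [/\ is_open S (inr (c, b)), lab S c b = false,
                 load S (inr (c, b)) <= 1 - sz i & S' = add_inst S i c b f])
  \/ ((forall b, is_open S (inr (c, b)) -> lab S c b = false ->
                 1 - sz i < load S (inr (c, b))) /\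
      ((exists b, [/\ is_open S (inr (c, b)), lab S c b = true,
                      load S (inr (c, b)) <= 1 - sz i & S' = add_inst S i c b f])
       \/ ((forall b, is_open S (inr (c, b)) -> lab S c b = true ->
                      1 - sz i < load S (inr (c, b))) /\
           exists b, ~~ is_open S (inr (c, b)) /\ S' = add_inst S i c b f))).

Definition arrive (S : state) (i : 'I_n) (S' : state) : Prop :=
  ~~ pres S i /\
  let g' := if (2 ^ guess S <= nitems S)%N then (guess S).+1 else guess S in
  let S1 := setguess S g' in
  (exists c, [/\ is_class (sz i) c, (c < g')%N & inst_arrive S1 i c S'])
  \/ ((forall c, is_class (sz i) c -> (g' <= c)%N) /\ S' = put S1 i (inl g')).

(* FirstFit migration of the items js out of bin (c,b); L is the current
   ordering of target bins (initially Bad bins then Good bins, new bins are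
   appended at the end when opened). *)
Inductive migrate (c b : nat) (f : R) : seq nat -> seq 'I_n -> state -> state -> Prop :=
| mig_nil L S : migrate c b f L [::] S S
| mig_fit L j js S S' b' :
    b' \in L -> load S (inr (c, b')) <= 1 - sz j ->
    (forall b'', b'' \in take (index b' L) L -> 1 - sz j < load S (inr (c, b''))) ->
    migrate c b f L js (add_inst S j c b' f) S' ->
    migrate c b f L (j :: js) S S'
| mig_new L j js S S' b' :
    (forall b'', b'' \in L -> 1 - sz j < load S (inr (c, b''))) ->
    ~~ is_open S (inr (c, b')) ->
    migrate c b f (rcons L b') js (add_inst S j c b' f) S' ->
    migrate c b f L (j :: js) S S'.

Definition depart (S : state) (i : 'I_n) (S' : state) : Prop :=
  pres S i /\
  let S1 := remove S i in
  match loc S i with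
  | inr (c, b) =>
      if lab S c b && (load S1 (inr (c, b)) < alpha) then
        exists (L1 L2 : seq nat) (js : seq 'I_n),
          [/\ uniq (L1 ++ L2),
              (forall b', b' \in L1 ++ L2 <-> (b' != b /\ is_open S1 (inr (c, b')))),
              all (fun b' => ~~ lab S1 c b') L1 && all (lab S1 c) L2,
              perm_eq js [seq j <- enum 'I_n | pres S1 j && (loc S1 j == inr (c, b))]
            & migrate c b (fpar c) (L1 ++ L2) js S1 S']
      else S' = S1
  | inl _ => S' = S1
  end.

(* events: (true, i) = arrival of i, (false, i) = departure of i *)
Definition event := (bool * 'I_n)%type.
Definition etime (e : event) : R := if e.1 then a e.2 else a e.2 + d e.2.
Definition step (S : state) (e : event) (S' : state) : Prop :=
  if e.1 then arrive S e.2 S' else depart S e.2 S'.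

Inductive steps : state -> seq event -> state -> Prop :=
| steps_nil S : steps S [::] S
| steps_cons S e es S1 S2 : step S e S1 -> steps S1 es S2 -> steps S (e :: es) S2.

(* a valid processing order of all events: by time, and at equal times
   departures before arrivals *)
Definition evle (e e' : event) : bool :=
  (etime e < etime e') || ((etime e == etime e') && (~~ e.1 || e'.1)).
Definition valid_schedule (sch : seq event) : Prop :=
  perm_eq sch (enum {: bool * 'I_n}) /\ pairwise evle sch.

Definition events_upto (sch : seq event) (t : R) : seq event :=
  take (count (fun e => etime e <= t) sch) sch.

End DBP.

(* Main.v *)
Require Import Defs.
From HB Require Import structures.
From mathcomp Require Import all_boot all_order all_algebra.
From mathcomp Require Import all_classical all_reals all_analysis.
From mathcomp Require Import lra zify.
Import Order.TTheory GRing.Theory Num.Theory.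
Local Open Scope ring_scope.
Set Implicit Arguments. Unset Strict Implicit.

Section Core.
Variable R : realType.
Variable n : nat.
Variable sz : 'I_n -> R.
Variable alpha : R.
Hypothesis sz_ge0 : forall i, 0 <= sz i.
Hypothesis sz_le1 : forall i, sz i <= 1.
Hypothesis alpha_gt0 : 0 < alpha.
Hypothesis alpha_lt : alpha < 2^-1.

Lemma is_openP (S : state n) B : reflect (exists2 x, pres S x & loc S x = B) (is_open S B).
Proof.
apply: (iffP existsP) => [[x /andP[px /eqP lx]]|[x px lx]]; exists x => //.
by rewrite px lx eqxx.
Qed.

Lemma load_ge0 S B : 0 <= load sz S B.
Proof. by rewrite /load; apply: sumr_ge0 => i _; exact: sz_ge0. Qed.

Lemma load_ge_item S B x : pres S x -> loc S x = B -> sz x <= load sz S B.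
Proof.
move=> px lx; rewrite /load (bigD1 x) /=; last by rewrite px lx eqxx.
by rewrite lerDl; apply: sumr_ge0 => i _; exact: sz_ge0.
Qed.

Lemma sum_split (j : 'I_n) (P : pred 'I_n) (F : 'I_n -> R) :
 \sum_(x | P x) F x = \sum_(x | (x != j) && P x) F x + (if P j then F j else 0).
Proof.
case Pj: (P j).
- by rewrite (bigD1 j) //= addrC; congr (_ + _); apply: eq_bigl => x; rewrite andbC.
- rewrite addr0; apply: eq_bigl => x; by case: (eqVneq x j) => [->|]; rewrite ?Pj ?eqxx.
Qed.

Definition rest S j B' := \sum_(x | (x != j) && (pres S x && (loc S x == B'))) sz x.

Lemma load_base S j B' : load sz S B' =
  rest S j B' + (if pres S j && (loc S j == B') then sz j else 0).
Proof. exact: sum_split. Qed.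

Lemma load_put S j B B' : load sz (put S j B) B' =
  rest S j B' + (if B == B' then sz j else 0).
Proof.
rewrite /load (sum_split j) /= eqxx /=; congr (_ + _).
by apply: eq_bigl => x; case: (eqVneq x j).
Qed.

Lemma load_remove S j B' : load sz (remove S j) B' = rest S j B'.
Proof.
rewrite /load (sum_split j) /= eqxx /= addr0.
by apply: eq_bigl => x; case: (eqVneq x j).
Qed.

Lemma rest_le S j B' : rest S j B' <= load sz S B'.
Proof. rewrite (load_base S j B') lerDl; case: ifP => // _; exact: sz_ge0. Qed.

Lemma load_closed S B : ~~ is_open S B -> load sz S B = 0.
Proof.
move=> /is_openP nB; rewrite /load big1 // => x /andP[px /eqP lx].
by case: nB; exists x.
Qed.

Lemma fpar_ge c : 2^-1 <= fpar R c.
Proof.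
rewrite /fpar; case: c => [|c] //=.
have h : (2^-1 : R) ^+ c.+1 <= 2^-1.
  by rewrite exprS ler_piMr // exprn_ile1 ?invr_ge0 ?invf_le1 ?ler1n.
lra.
Qed.

Lemma class_fits s c : is_class s c -> (0 < c)%N -> fpar R c <= 1 - s.
Proof.
case=> _ h; rewrite /fpar; case: c h => [|c] // h _ /=.
by rewrite lerB.
Qed.

Lemma class0 (s : R) : is_class s 0 -> 2^-1 < s.
Proof. by case; rewrite expr1. Qed.

Definition Core (S : state n) (X : nat -> nat -> bool) : Prop :=
 [/\ forall j g, pres S j -> loc S j = inl g -> (g <= guess S)%N,
     forall j c b, pres S j -> loc S j = inr (c,b) -> is_class (sz j) c /\ (c < guess S)%N,
     forall c b, is_open S (inr (c,b)) -> lab S c b = false -> load sz S (inr (c,b)) < fpar R c,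
     forall c b b', is_open S (inr (c,b)) -> lab S c b = false ->
        is_open S (inr (c,b')) -> lab S c b' = false -> b = b'
   & forall c b, is_open S (inr (c,b)) -> lab S c b -> X c b \/ alpha <= load sz S (inr (c,b))].

Lemma bad_fits S X c b (s : R) : Core S X -> is_open S (inr (c,b)) -> lab S c b = false ->
  is_class s c -> load sz S (inr (c,b)) <= 1 - s.
Proof.
case=> _ C3 C5 _ _ op lb cs.
case: c op lb cs => [|c] op lb cs.
- have := C5 _ _ op lb; rewrite /fpar /=.
  case/is_openP: op => x px lx.
  have [/class0 h _] := C3 _ _ _ px lx.
  have := load_ge_item px lx => h2 h3.
  have : sz x < 2^-1 := le_lt_trans h2 h3.
  by rewrite ltNge (ltW h).
- exact: le_trans (ltW (C5 _ _ op lb)) (class_fits cs _).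
Qed.


Lemma ai_pres S j c b f : pres (add_inst sz S j c b f) = pres (put S j (inr (c,b))).
Proof. by rewrite /add_inst; case: ifP. Qed.
Lemma ai_loc S j c b f : loc (add_inst sz S j c b f) = loc (put S j (inr (c,b))).
Proof. by rewrite /add_inst; case: ifP. Qed.
Lemma ai_guess S j c b f : guess (add_inst sz S j c b f) = guess S.
Proof. by rewrite /add_inst; case: ifP. Qed.
Lemma ai_lab S j c b f c' b' : lab (add_inst sz S j c b f) c' b' =
  if (c' == c) && (b' == b) then (is_open S (inr (c,b)) && lab S c b) ||
     (f <= load sz (put S j (inr (c,b))) (inr (c,b))) else lab S c' b'.
Proof.
rewrite /add_inst; case: ifP => H /=; case: ifP => // /andP[/eqP E1 /eqP E2]; subst; rewrite ?H /=.
- by case/andP: H.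
Qed.
Lemma ai_load S j c b f B' : load sz (add_inst sz S j c b f) B' = load sz (put S j (inr (c,b))) B'.
Proof. by rewrite /load ai_pres ai_loc. Qed.
Lemma ai_open S j c b f B' : is_open (add_inst sz S j c b f) B' = is_open (put S j (inr (c,b))) B'.
Proof. by rewrite /is_open ai_pres ai_loc. Qed.

Lemma bneq (c' b' c b : nat) : (inr (c',b') == inr (c,b) :> binid) = (c' == c) && (b' == b).
Proof. by apply/eqP/andP => [[-> ->]|[/eqP-> /eqP->]] //; split. Qed.

Lemma add_inst_core S X j c b :
 Core S X -> is_class (sz j) c -> (c < guess S)%N ->
 (pres S j -> exists2 b0, loc S j = inr (c,b0) & (b0 != b) && X c b0) ->
 (is_open S (inr (c,b)) \/ (forall b', is_open S (inr (c,b')) -> lab S c b' = false -> False)) ->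
 Core (add_inst sz S j c b (fpar R c)) X.
Proof.
move=> [C2 C3 C5 C6 CG] cj cg oldj mode.
set S' := add_inst _ _ _ _ _ _.
have eP x : pres S' x = (x == j) || pres S x by rewrite /S' ai_pres /=; case: (x == j).
have eL x : loc S' x = if x == j then inr (c,b) else loc S x by rewrite /S' ai_loc.
have eG : guess S' = guess S by rewrite /S' ai_guess.
have old : pres S j -> loc S j != inr (c,b).
  move=> pj; case: (oldj pj) => b0 -> /andP[nb _].
  by rewrite bneq eqxx /=.
have oS' B' : B' != inr (c,b) -> is_open S' B' -> is_open S B'.
  move=> nB /is_openP [x]; rewrite eP eL; case: eqP => [_ _ E|_ /= px lx].
  - by rewrite -E eqxx in nB.
  - by apply/is_openP; exists x.
have oB : is_open S' (inr (c,b)) by apply/is_openP; exists j; rewrite ?eP ?eL eqxx.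
have ldB : load sz S' (inr (c,b)) = load sz S (inr (c,b)) + sz j.
  rewrite /S' ai_load load_put eqxx (load_base S j (inr (c,b))).
  case: ifP => [/andP[pj lj]|_]; [by rewrite (negbTE (old pj)) in lj | by rewrite addr0].
have ldO B' : B' != inr (c,b) -> load sz S' B' <= load sz S B'.
  move=> nB; rewrite /S' ai_load load_put eq_sym (negbTE nB) addr0; exact: rest_le.
have ldE B' : B' != inr (c,b) -> (pres S j -> loc S j != B') -> load sz S' B' = load sz S B'.
  move=> nB nO; rewrite /S' ai_load load_put eq_sym (negbTE nB) addr0 (load_base S j B').
  case: ifP => [/andP[pj lj]|_]; [by rewrite (negbTE (nO pj)) in lj | by rewrite addr0].
have eLab c' b' : lab S' c' b' = if (c' == c) && (b' == b) then
    (is_open S (inr (c,b)) && lab S c b) || (fpar R c <= load sz S' (inr (c,b))) else lab S c' b'.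
  by rewrite /S' ai_lab; have := ldB; rewrite /S' ai_load => ->; rewrite -ldB.
have badS' c' b' : is_open S' (inr (c',b')) -> lab S' c' b' = false ->
    (is_open S (inr (c',b')) /\ lab S c' b' = false) \/ [/\ c' = c, b' = b & ~~ is_open S (inr (c,b))].
  move=> o' l'; rewrite eLab in l'; case: ifP l' => [/andP[/eqP E1 /eqP E2]|Hne] l'.
  - subst; move: l' => /norP [l1 _].
    case oo: (is_open S (inr (c,b))).
    + by left; split => //; move: l1; rewrite oo /= => /negbTE.
    + by right; split.
  - left; split => //; apply: oS' o'; by rewrite bneq Hne.
split.
- move=> x g; rewrite eP eL; case: eqP => [_ _ //|_ /= px lx]; rewrite eG; exact: C2 px lx.
- move=> x c' b'; rewrite eP eL eG; case: eqP => [-> _ [<- _]|_ /= px lx]; first by split.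
  exact: C3 px lx.
- move=> c' b' o' l'; rewrite eLab in l'; case: ifP l' => [/andP[/eqP E1 /eqP E2]|Hne] l'.
  + subst; move/negbT: l'; rewrite negb_or => /andP[_]; by rewrite -ltNge.
  + have nB : inr (c',b') != inr (c,b) :> binid by rewrite bneq Hne.
    exact: le_lt_trans (ldO _ nB) (C5 _ _ (oS' _ nB o') l').
- move=> c' b1 b2 o1 l1 o2 l2.
  case: (badS' _ _ o1 l1) => [[p1 q1]|[e1 e2 n1]];
    case: (badS' _ _ o2 l2) => [[p2 q2]|[e3 e4 n2]].
  + exact: C6 p1 q1 p2 q2.
  + subst; exfalso; case: mode => [oo|nob]; [by rewrite oo in n2 | exact: nob _ p1 q1].
  + subst; exfalso; case: mode => [oo|nob]; [by rewrite oo in n1 | exact: nob _ p2 q2].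
  + by subst.
- move=> c' b' o' l'; rewrite eLab in l'; case: ifP l' => [/andP[/eqP E1 /eqP E2]|Hne] l'.
  + subst; case/orP: l' => [/andP[oo ll]|fl].
    * rewrite ldB; case: (CG _ _ oo ll) => [xx|al]; [by left | right].
      by apply: le_trans al _; rewrite lerDl.
    * right; apply: le_trans (ltW alpha_lt) (le_trans (fpar_ge c) fl).
  + have nB : inr (c',b') != inr (c,b) :> binid by rewrite bneq Hne.
    case: (CG _ _ (oS' _ nB o') l') => [xx|al]; first by left.
    case pj: (pres S j); last by right; rewrite ldE // => pj'; rewrite pj' in pj.
    case: (oldj pj) => b0 lj /andP[_ xb0].
    case: (eqVneq (inr (c',b') : binid) (inr (c,b0))) => [[E1 E2]|ne].
    * by subst; left.
    * by right; rewrite ldE // => _; rewrite lj eq_sym.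
Qed.

Lemma ai_presE S j c b f x : pres (add_inst sz S j c b f) x = (x == j) || pres S x.
Proof. by rewrite ai_pres /=; case: (x == j). Qed.
Lemma ai_locE S j c b f x : loc (add_inst sz S j c b f) x = if x == j then inr (c,b) else loc S x.
Proof. by rewrite ai_loc. Qed.
Lemma ai_open_fwd S j c b f B : is_open S B -> B != loc S j -> is_open (add_inst sz S j c b f) B.
Proof.
case/is_openP => x px lx nB; apply/is_openP; exists x; first by rewrite ai_presE px orbT.
rewrite ai_locE; case: eqP => // E; by rewrite -lx E eqxx in nB.
Qed.
Lemma ai_open_back S j c b f B : is_open (add_inst sz S j c b f) B -> B != inr (c,b) -> is_open S B.
Proof.
case/is_openP => x; rewrite ai_presE ai_locE; case: eqP => [_ _ E|_ /= px lx].
- by rewrite -E eqxx.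
- by move=> _; apply/is_openP; exists x.
Qed.
Lemma ai_open_new S j c b f : is_open (add_inst sz S j c b f) (inr (c,b)).
Proof. by apply/is_openP; exists j; rewrite ?ai_presE ?ai_locE eqxx. Qed.

Lemma core_weaken S X (Y : nat -> nat -> bool) : Core S X ->
  (forall c b, is_open S (inr (c,b)) -> lab S c b -> X c b -> Y c b \/ alpha <= load sz S (inr (c,b))) ->
  Core S Y.
Proof.
case=> C2 C3 C5 C6 CG H; split => // c b o l.
by case: (CG _ _ o l) => [x|]; [exact: H | right].
Qed.

Lemma remove_core S X i : Core S X -> pres S i ->
  Core (remove S i) (fun c b => X c b || (loc S i == inr (c,b))).
Proof.
case=> C2 C3 C5 C6 CG pi.
have eP x : pres (remove S i) x -> pres S x by rewrite /=; case: (x == i).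
have oB B : is_open (remove S i) B -> is_open S B.
  by case/is_openP => x /eP px lx; apply/is_openP; exists x.
have ld B : load sz (remove S i) B <= load sz S B by rewrite load_remove rest_le.
split => /=.
- by move=> x g /eP; exact: C2.
- by move=> x c b /eP; exact: C3.
- by move=> c b /oB o l; exact: le_lt_trans (ld _) (C5 _ _ o l).
- by move=> c b b' /oB o1 l1 /oB o2 l2; exact: C6 o1 l1 o2 l2.
- move=> c b /oB o l; case: (CG _ _ o l) => [x|al]; first by left; rewrite /= x.
  case: (eqVneq (loc S i) (inr (c,b))) => [E|ne]; first by left; rewrite /= ?orbT.
  right; rewrite load_remove; move: al; rewrite (load_base S i) pi /= (negbTE ne) addr0 //.
Qed.

Definition X0 (c b0 : nat) := fun c' b' => (c' == c) && (b' == b0).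

Lemma migrate_core c b0 L js T T' :
 migrate sz c b0 (fpar R c) L js T T' ->
 Core T (X0 c b0) ->
 lab T c b0 ->
 b0 \notin L ->
 (forall b'', b'' \in L -> is_open T (inr (c,b''))) ->
 (forall b'', b'' != b0 -> is_open T (inr (c,b'')) -> b'' \in L) ->
 uniq js ->
 (forall j, j \in js -> pres T j /\ loc T j = inr (c,b0)) ->
 (forall j, pres T j -> loc T j = inr (c,b0) -> j \in js) ->
 [/\ Core T' (fun _ _ => false), (forall j, pres T' j = pres T j) & guess T' = guess T].
Proof.
elim => {L js T T'} [L T | L j js T T' b' bL _ _ _ IH | L j js T T' b' nofit nb _ IH]
  CT lb nbL Lop Lcl ujs injs clos.
- split => //; apply: (core_weaken (Y := fun _ _ => false) CT) => c' b' o _ /andP[/eqP E1 /eqP E2]; subst.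
  by case/is_openP: o => x px lx; have := clos _ px lx.
- have [pj lj] := injs j (mem_head _ _).
  case: CT => C2 C3 C5 C6 CG.
  have [cj cg] := C3 _ _ _ pj lj.
  have CT : Core T (X0 c b0) by split.
  have nb' : b' != b0 by apply: contraNneq nbL => <-.
  move: ujs => /= /andP[njs ujs].
  have oldj : pres T j -> exists2 b1, loc T j = inr (c,b1) & (b1 != b') && X0 c b0 c b1.
    by move=> _; exists b0; rewrite // eq_sym nb' /X0 !eqxx.
  have CT1 := add_inst_core CT cj cg oldj (or_introl (Lop _ bL)).
  set T1 := add_inst _ _ _ _ _ _ in CT1 *.
  have lb1 : lab T1 c b0 by rewrite /T1 ai_lab [b0 == _]eq_sym (negbTE nb') andbF.
  have Lop1 : forall b'', b'' \in L -> is_open T1 (inr (c,b'')).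
    move=> b'' bL''; apply: ai_open_fwd; first exact: Lop.
    by rewrite lj bneq eqxx /=; apply: contraNneq nbL => <-.
  have Lcl1 : forall b'', b'' != b0 -> is_open T1 (inr (c,b'')) -> b'' \in L.
    move=> b'' nb'' o; case: (eqVneq b'' b') => [->//|ne]; apply: Lcl nb'' _.
    by apply: ai_open_back o _; rewrite bneq (negbTE ne) andbF.
  have injs1 : forall x, x \in js -> pres T1 x /\ loc T1 x = inr (c,b0).
    move=> x xjs; have nx : x != j by apply: contraNneq njs => <-.
    have xin : x \in j :: js by rewrite in_cons xjs orbT.
    have [px lx] := injs x xin.
    by rewrite /T1 ai_presE ai_locE (negbTE nx) px.
  have clos1 : forall x, pres T1 x -> loc T1 x = inr (c,b0) -> x \in js.
    move=> x; rewrite /T1 ai_presE ai_locE; case: eqP => [_ _ [E]|nx /= px lx].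
    * by rewrite E eqxx in nb'.
    * by have := clos _ px lx; rewrite in_cons; case: eqP.
  have [CT' eP eG] := IH CT1 lb1 nbL Lop1 Lcl1 ujs injs1 clos1.
  split => //.
  + by move=> x; rewrite eP /T1 ai_presE; case: eqP => // ->; rewrite pj.
  + by rewrite eG /T1 ai_guess.
- have [pj lj] := injs j (mem_head _ _).
  have CT0 := CT.
  case: CT => C2 C3 C5 C6 CG.
  have [cj cg] := C3 _ _ _ pj lj.
  have CT : Core T (X0 c b0) by split.
  have nb' : b' != b0.
    apply: contraNneq nb => ->; by apply/is_openP; exists j.
  move: ujs => /= /andP[njs ujs].
  have mode : forall b'', is_open T (inr (c,b'')) -> lab T c b'' = false -> False.
    move=> b'' o l; have nb'' : b'' != b0 by apply: contraTneq lb => <-; rewrite l.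
    have := nofit _ (Lcl _ nb'' o); have := bad_fits CT o l cj.
    by move=> h1 h2; move: (le_lt_trans h1 h2); rewrite ltxx.
  have oldj : pres T j -> exists2 b1, loc T j = inr (c,b1) & (b1 != b') && X0 c b0 c b1.
    by move=> _; exists b0; rewrite // eq_sym nb' /X0 !eqxx.
  have CT1 := add_inst_core CT cj cg oldj (or_intror mode).
  set T1 := add_inst _ _ _ _ _ _ in CT1 *.
  have nbL' : b0 \notin rcons L b' by rewrite mem_rcons in_cons eq_sym (negbTE nb').
  have lb1 : lab T1 c b0 by rewrite /T1 ai_lab [b0 == _]eq_sym (negbTE nb') andbF.
  have Lop1 : forall b'', b'' \in rcons L b' -> is_open T1 (inr (c,b'')).
    move=> b''; rewrite mem_rcons in_cons; case: eqP => [->|_ /= bL''].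
      by rewrite /T1 => _; exact: ai_open_new.
    apply: ai_open_fwd; first exact: Lop.
    by rewrite lj bneq eqxx /=; apply: contraNneq nbL => <-.
  have Lcl1 : forall b'', b'' != b0 -> is_open T1 (inr (c,b'')) -> b'' \in rcons L b'.
    move=> b'' nb'' o; rewrite mem_rcons in_cons; case: (eqVneq b'' b') => [//|ne] /=; apply: Lcl nb'' _.
    by apply: ai_open_back o _; rewrite bneq (negbTE ne) andbF.
  have injs1 : forall x, x \in js -> pres T1 x /\ loc T1 x = inr (c,b0).
    move=> x xjs; have nx : x != j by apply: contraNneq njs => <-.
    have xin : x \in j :: js by rewrite in_cons xjs orbT.
    have [px lx] := injs x xin.
    by rewrite /T1 ai_presE ai_locE (negbTE nx) px.
  have clos1 : forall x, pres T1 x -> loc T1 x = inr (c,b0) -> x \in js.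
    move=> x; rewrite /T1 ai_presE ai_locE; case: eqP => [_ _ [E]|nx /= px lx].
    * by rewrite E eqxx in nb'.
    * by have := clos _ px lx; rewrite in_cons; case: eqP.
  have [CT' eP eG] := IH CT1 lb1 nbL' Lop1 Lcl1 ujs injs1 clos1.
  split => //.
  + by move=> x; rewrite eP /T1 ai_presE; case: eqP => // ->; rewrite pj.
  + by rewrite eG /T1 ai_guess.
Qed.

Definition none_X := fun (_ _ : nat) => false.

Lemma depart_core S i S' : Core S none_X -> depart sz alpha S i S' ->
  [/\ Core S' none_X, (forall j, pres S' j = (j != i) && pres S j) & guess S' = guess S].
Proof.
move=> CS [pi H]; cbv zeta in H; move: H.
have CR := remove_core CS pi.
have eP1 x : pres (remove S i) x = (x != i) && pres S x by rewrite /=; case: (x == i).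
case E: (loc S i) => [g|[c b]].
- move=> ->; split => //; apply: (core_weaken (Y := none_X) CR) => c b _ _.
  by rewrite /= E.
- case: ifP => [/andP[lb ld] [L1 [L2 [js [uL iffL labs pjs mig]]]] | nmig ->].
  + have CR' : Core (remove S i) (X0 c b).
      apply: (core_weaken CR) => c' b' _ _; rewrite /= E bneq => h; left.
      by rewrite /X0 (eq_sym c') (eq_sym b').
    have nbL : b \notin L1 ++ L2 by apply/negP => /iffL [/eqP].
    have Lop : forall b'', b'' \in L1 ++ L2 -> is_open (remove S i) (inr (c,b'')).
      by move=> b'' /iffL [].
    have Lcl : forall b'', b'' != b -> is_open (remove S i) (inr (c,b'')) -> b'' \in L1 ++ L2.
      by move=> b'' h1 h2; apply/iffL.
    have ujs : uniq js by rewrite (perm_uniq pjs) filter_uniq // enum_uniq.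
    have injs : forall x, x \in js -> pres (remove S i) x /\ loc (remove S i) x = inr (c,b).
      by move=> x; rewrite (perm_mem pjs) mem_filter => /andP[/andP[-> /eqP ->] _].
    have clos : forall x, pres (remove S i) x -> loc (remove S i) x = inr (c,b) -> x \in js.
      by move=> x px lx; rewrite (perm_mem pjs) mem_filter px lx eqxx mem_enum.
    have [C' eP eG] := migrate_core mig CR' lb nbL Lop Lcl ujs injs clos.
    by split => // x; rewrite eP eP1.
  + split => //; apply: (core_weaken (Y := none_X) CR) => c' b' _ l; rewrite /= E bneq.
    case/andP => /eqP E1 /eqP E2; subst; right.
    by rewrite leNgt; move: nmig; rewrite l /= => ->.
Qed.

Lemma setguess_core S X g : Core S X -> (guess S <= g)%N -> Core (setguess S g) X.
Proof.
case=> C2 C3 C5 C6 CG h; split => //=.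
- by move=> x g0 px lx; exact: leq_trans (C2 _ _ px lx) h.
- by move=> x c b px lx; have [? ?] := C3 _ _ _ px lx; split => //; exact: leq_trans h.
Qed.

Lemma put_junk_core S X i g : Core S X -> ~~ pres S i -> (g <= guess S)%N ->
  Core (put S i (inl g)) X.
Proof.
case=> C2 C3 C5 C6 CG npi h.
have eo c b : is_open (put S i (inl g)) (inr (c,b)) = is_open S (inr (c,b)).
  apply/is_openP/is_openP => [[x]|[x px lx]] /=.
  - by case: eqP => // _ px lx; exists x.
  - exists x; first by rewrite /= px; case: (x == i).
    rewrite /=; case: eqP => // E; by rewrite -E px in npi.
have el c b : load sz (put S i (inl g)) (inr (c,b)) = load sz S (inr (c,b)).
  by rewrite load_put (load_base S i) (negbTE npi).
split => /=.
- by move=> x g0; case: eqP => [_ _ [<-]|_]; [| exact: C2].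
- by move=> x c b; case: eqP => [//|_]; exact: C3.
- by move=> c b; rewrite eo el; exact: C5.
- by move=> c b b'; rewrite !eo; exact: C6.
- by move=> c b; rewrite eo el; exact: CG.
Qed.

Definition GI (rho g : nat) := (g == 0)%N || (2 ^ g.-1 < rho)%N.

Lemma arrive_core rho S i S' : Core S none_X -> (nitems S < rho)%N -> GI rho (guess S) ->
  arrive sz S i S' ->
  [/\ Core S' none_X, (forall j, pres S' j = (j == i) || pres S j) & GI rho (guess S')].
Proof.
move=> CS nr gi [npi H]; cbv zeta in H; move: H.
set g' := if _ then _ else _.
have gg : (guess S <= g')%N by rewrite /g'; case: ifP.
have CS1 := setguess_core CS gg.
have GI' : GI rho g'.
  rewrite /g'; case: ifP => // h; by rewrite /GI /= (leq_ltn_trans h nr).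
case=> [[c [cc cg ia]] | [nc ->]].
- have oldj : pres (setguess S g') i -> exists2 b1, loc (setguess S g') i = inr (c,b1) & (b1 != 0%N) && none_X c b1.
    by move=> p; rewrite /= p in npi.
  have fin : forall b, (is_open (setguess S g') (inr (c,b)) \/
       (forall b', is_open (setguess S g') (inr (c,b')) -> lab (setguess S g') c b' = false -> False)) ->
     [/\ Core (add_inst sz (setguess S g') i c b (fpar R c)) none_X,
        (forall j, pres (add_inst sz (setguess S g') i c b (fpar R c)) j = (j == i) || pres S j) &
        GI rho (guess (add_inst sz (setguess S g') i c b (fpar R c)))].
    move=> b m; split; last by rewrite ai_guess.
    + apply: add_inst_core CS1 cc cg _ m => p; by rewrite /= p in npi.
    + by move=> j; rewrite ai_presE.
  case: ia.
  + case=> b0 [op0 l0 f0 E0]; rewrite E0; exact: fin (or_introl op0).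
  case=> nobad; case.
  + case=> b0 [op0 l0 f0 E0]; rewrite E0; exact: fin (or_introl op0).
  case=> nogood [b0 [nb0 E0]]; rewrite E0.
  + apply: fin; right => b' o l.
    have := nobad _ o l; have := bad_fits CS1 o l cc.
    by move=> h1 h2; move: (le_lt_trans h1 h2); rewrite ltxx.
- split; first exact: put_junk_core CS1 npi (leqnn _).
  + by move=> j /=; case: (j == i).
  + by [].
Qed.

Lemma sum_filter_le (T : Type) (p : pred T) (F : T -> R) (s : seq T) :
  (forall x, 0 <= F x) -> \sum_(x <- seq.filter p s) F x <= \sum_(x <- s) F x.
Proof.
move=> F0; elim: s => [|x s IH] /=; first by rewrite !big_nil.
rewrite big_cons; case: (p x); rewrite ?big_cons; first by rewrite lerD2l.
by apply: le_trans IH _; rewrite lerDr.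
Qed.

Lemma sum_ge_const (T : eqType) (F : T -> R) (s : seq T) (m : R) :
  (forall x, x \in s -> m <= F x) -> m * (size s)%:R <= \sum_(x <- s) F x.
Proof.
elim: s => [|x s IH] H; first by rewrite big_nil mulr0.
rewrite big_cons /= -addn1 natrD mulrDr mulr1 addrC; apply: lerD.
  by apply: H; exact: mem_head.
by apply: IH => y ys; apply: H; rewrite in_cons ys orbT.
Qed.

Lemma sum_loads S (U : seq binid) : uniq U ->
  \sum_(B <- U) load sz S B = \sum_(i | pres S i && (loc S i \in U)) sz i.
Proof.
elim: U => [|B U IH] /=.
  by move=> _; rewrite big_nil big1 // => i /andP[].
move=> /andP[nB uU]; rewrite big_cons IH // /load big_mkcond [X in _ + X]big_mkcond [RHS]big_mkcond -big_split /=.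
apply: eq_bigr => i _; rewrite in_cons; case: (pres S i) => /=; last by rewrite addr0.
case: eqP => [E|_] /=; first by rewrite E (negbTE nB) addr0.
by rewrite add0r.
Qed.

Lemma count_bins S (k : nat) : Core S none_X ->
  \sum_(i | pres S i) sz i <= k%:R ->
  (nopen S)%:R <= k%:R / alpha + (2 * guess S + 1)%:R.
Proof.
case=> C2 C3 C5 C6 CG hk.
rewrite /nopen; set U := undup _.
have uU : uniq U := undup_uniq _.
have memU B : B \in U -> exists2 i, pres S i & loc S i = B.
  rewrite mem_undup => /mapP [i]; rewrite mem_filter => /andP[pi _] ->; by exists i.
have Uin i : pres S i -> loc S i \in U.
  by move=> pi; rewrite mem_undup; apply/mapP; exists i; rewrite // mem_filter pi mem_enum.
have openU B : B \in U -> is_open S B by case/memU => i pi li; apply/is_openP; exists i.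
pose isJ (B : binid) := if B is inl _ then true else false.
pose labB (B : binid) := if B is inr (c,b) then lab S c b else false.
pose V := seq.filter (predC isJ) U.
have eU : size U = (count isJ U + (count labB V + count (predC labB) V))%N.
  by rewrite count_predC /V size_filter count_predC.
have hJ : (count isJ U <= (guess S).+1)%N.
  rewrite -size_filter -(size_iota 0 (guess S).+1) -(size_map (@inl nat (nat * nat)) (iota 0 (guess S).+1)).
  apply: uniq_leq_size; first by rewrite filter_uniq.
  move=> B; rewrite mem_filter; case: B => [g /andP[_ BU]|[c b] /andP[] //].
  case/memU: BU => i pi li; apply/mapP; exists g => //.
  by rewrite mem_iota /= add0n ltnS (C2 _ _ pi li).
have hB : (count (predC labB) V <= guess S)%N.
  rewrite -size_filter.
  pose cls (B : binid) := if B is inr (c,_) then c else 0%N.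
  have Vin B : B \in seq.filter (predC labB) V ->
      exists c b, [/\ B = inr (c,b), is_open S (inr (c,b)), lab S c b = false & (c < guess S)%N].
    rewrite mem_filter /V mem_filter; case: B => [g|[c b]] /=; first by [].
    move=> /andP[nl BU].
    exists c, b; split => //; first exact: openU; first exact: negbTE.
    by case/memU: BU => i pi li; case: (C3 _ _ _ pi li).
  rewrite -(size_map cls) -(size_iota 0 (guess S)).
  apply: uniq_leq_size.
    rewrite map_inj_in_uniq; first by rewrite !filter_uniq.
    move=> B1 B2 /Vin [c1 [b1 [-> o1 l1 _]]] /Vin [c2 [b2 [-> o2 l2 _]]] /= E; subst.
    by rewrite (C6 _ _ _ o1 l1 o2 l2).
  move=> x /mapP [B /Vin [c [b [-> _ _ cg]]] ->]; by rewrite mem_iota.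
have hG : alpha * (count labB V)%:R <= k%:R.
  rewrite -size_filter.
  apply: le_trans (sum_ge_const (F := load sz S) _) _.
    move=> B; rewrite mem_filter /V mem_filter; case: B => [g|[c b]] /=; first by [].
    move=> /andP[l BU].
    by case: (CG _ _ (openU _ BU) l).
  idtac.
  apply: (le_trans (sum_filter_le labB V (load_ge0 S))).
  apply: (le_trans (sum_filter_le (predC isJ) U (load_ge0 S))).
  rewrite sum_loads //; apply: le_trans hk; rewrite le_eqVlt; apply/orP; left; apply/eqP.
  by apply: eq_bigl => i; case pi: (pres S i); rewrite //= Uin.
have hG' : (count labB V)%:R <= k%:R / alpha :> R by rewrite ler_pdivlMr // mulrC.
have hJ' : (count isJ U)%:R <= (guess S).+1%:R :> R by rewrite ler_nat.
have hB' : (count (predC labB) V)%:R <= (guess S)%:R :> R by rewrite ler_nat.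
have -> : (2 * guess S + 1)%:R = (guess S).+1%:R + (guess S)%:R :> R.
  by rewrite -natrD; congr (_%:R); lia.
rewrite eU !natrD.
lra.
Qed.

End Core.

Section Sched.
Variables (R : realType) (n : nat) (a d sz : 'I_n -> R) (alpha : R).
Hypothesis sz_ge0 : forall i, 0 <= sz i.
Hypothesis alpha_gt0 : 0 < alpha.
Hypothesis alpha_lt : alpha < 2^-1.
Hypothesis d_gt0 : forall i, 0 < d i.
Variable sch : seq (event n).
Hypothesis Hsch : valid_schedule a d sch.
Variable rho : nat.
Hypothesis Hrho : is_rho a d rho.

Definition Inv (S : state n) (p : seq (event n)) : Prop :=
  [/\ Core sz alpha S none_X,
      forall j, pres S j = ((true,j) \in p) && ((false,j) \notin p)
    & GI rho (guess S)].

Lemma evle_le e e' : evle a d e e' -> etime a d e <= etime a d e'.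
Proof. by rewrite /evle => /orP [/ltW //|/andP [/eqP -> _]]. Qed.

Lemma sch_all e : e \in sch.
Proof. by case: Hsch => P _; rewrite (perm_mem P) mem_enum. Qed.
Lemma sch_uniq : uniq sch.
Proof. by case: Hsch => P _; rewrite (perm_uniq P) enum_uniq. Qed.

Lemma Inv_init : Inv (init_state n) [::].
Proof.
split => //; split => //=.
all: try by move=> c b /is_openP [x].
all: try by move=> c b b' /is_openP [x].
Qed.

Lemma Inv_step S p (b : bool) (i : 'I_n) r S' : Inv S p -> step sz alpha S (b,i) S' ->
  sch = p ++ (b,i) :: r -> Inv S' (rcons p (b,i)).
Proof.
move=> [CS PI gi] st Esch.
have pw : pairwise (evle a d) sch by case: Hsch.
rewrite Esch pairwise_cat /= in pw; move: pw => /and3P [ar _ /andP [ae _]].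
have pe : forall x, x \in p -> evle a d x (b,i).
  by move=> x xp; apply: (allrelP ar) => //; exact: mem_head.
have er : forall x, x \in r -> evle a d (b,i) x by move=> x; apply: (allP ae).
have inr' : forall x, x \notin p -> x != (b,i) -> x \in r.
  move=> x nxp nxe; have := sch_all x; rewrite Esch mem_cat in_cons (negbTE nxp) (negbTE nxe) //.
clear ar ae; case: b st Esch pe er inr' => st Esch pe er inr'; rewrite /step /= in st.
- have npi : ~~ pres S i by case: st.
  have nr : (nitems S < rho)%N.
    have Hsub : [set x | pres S x] \proper [set x | present a d (a i) x].
      apply/fintype.properP; split.
      + apply/fintype.subsetP => x; rewrite !inE => px; move: (px); rewrite PI => /andP[tx nfx].
        rewrite /present; apply/andP; split.
          by have := evle_le (pe _ tx).
        have fx : (false, x) \in r by apply: inr'.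
        have := er _ fx; rewrite /evle /= andbF orbF //.
      + exists i; rewrite !inE ?(negbTE npi) //.
        by rewrite /present lexx /= ltrDl d_gt0.
    apply: leq_trans (proper_card Hsub) _.
    by case: Hrho => _ ->.
  have [CS' PI' gi'] := arrive_core sz_ge0 alpha_lt CS nr gi st.
  split => // j; rewrite PI' PI !mem_rcons !in_cons !xpair_eqE /=.
  case: (eqVneq j i) => [->|nji] //=.
  apply/esym/negP => fp; have := evle_le (pe _ fp); rewrite /etime /=.
  by have := d_gt0 i; lra.
- have [CS' PI' eG] := depart_core sz_ge0 alpha_lt CS st.
  split => //; last by rewrite eG.
  move=> j; rewrite PI' PI !mem_rcons !in_cons !xpair_eqE /=.
  by case: (eqVneq j i) => [->|nji] //=; rewrite andbF.
Qed.

Lemma Inv_steps S q S' : steps sz alpha S q S' ->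
  forall p, Inv S p -> (exists r, sch = p ++ q ++ r) -> Inv S' (p ++ q).
Proof.
elim => [T|T e es T1 T2 st _ IH] p I [r Er]; first by rewrite cats0.
case: e st Er => b i st Er.
have I1 := Inv_step I st (Er : sch = p ++ (b,i) :: (es ++ r)).
rewrite -cat_rcons; apply: IH I1 _; exists r; by rewrite cat_rcons.
Qed.

Lemma take_count_sorted (t : R) s : pairwise (evle a d) s ->
  take (count (fun e => etime a d e <= t) s) s = [seq e <- s | etime a d e <= t].
Proof.
elim: s => [|e s IH] //= /andP[ae pw].
case: ifP => h; first by rewrite add1n /= IH.
have H0 : {in s, (fun e => etime a d e <= t) =1 pred0}.
  move=> x xs /=; apply/negbTE; rewrite -ltNge.
  apply: lt_le_trans (evle_le (allP ae _ xs)); by rewrite ltNge h.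
by rewrite (eq_in_count H0) count_pred0 (eq_in_filter H0) filter_pred0.
Qed.

End Sched.

Lemma ln2_ge (R : realType) : 2^-1 <= ln (2 : R).
Proof.
have e2 : expR (ln (2 : R)) = 2 by apply: lnK; rewrite posrE.
have := expR_ge1Dx (- ln (2 : R)); rewrite expRN e2.
lra.
Qed.

Lemma log_bound (R : realType) (rho g : nat) : GI rho g ->
  (2 * g + 1)%:R <= 4%:R * ln (rho%:R : R) + 4%:R.
Proof.
have lnge0 : 0 <= ln (rho%:R : R).
  case: rho => [|r]; first by rewrite ln0.
  by apply: ln_ge0; rewrite ler1n.
rewrite /GI; case: g => [_|g /= h]; first by rewrite /=; lra.
have h1 : ((2 ^ g)%:R : R) <= rho%:R by rewrite ler_nat ltnW.
have rpos : (0 : R) < rho%:R by apply: lt_le_trans h1; rewrite ltr0n expn_gt0.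
have h2 : ln ((2 ^ g)%:R : R) <= ln (rho%:R : R).
  by rewrite ler_ln ?posrE // ltr0n expn_gt0.
rewrite natrX lnXn // in h2.
have := ln2_ge R.
have -> : (2 * g.+1 + 1)%:R = 2 * g%:R + 3 :> R by rewrite natrD natrM; lra.
move=> l2.
have : (g%:R : R) * 2^-1 <= ln 2 *+ g.
  rewrite -[ln 2 *+ g]mulr_natr mulrC.
  by apply: ler_wpM2r; [exact: ler0n | exact: l2].
lra.
Qed.

Theorem lemma11 :
  exists C : nat,
  forall (R : realType) (alpha : R), 0 < alpha -> alpha < 2^-1 ->
  forall (n : nat) (a d sz : 'I_n -> R),
    (forall i, 0 <= a i) -> (forall i, 0 <= sz i <= 1) -> (forall i, 0 < d i) ->
  forall sch : seq (event n), valid_schedule a d sch ->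
  forall rho : nat, is_rho a d rho ->
  forall (t : R) (k : nat), is_OPT a d sz t k ->
  forall S : state n, steps sz alpha (init_state n) (events_upto a d sch t) S ->
    (nopen S)%:R <= k%:R / alpha + C%:R * ln (rho%:R) + C%:R.
Proof.
exists 4%N => R alpha a0 a1 n a d sz ha hsz hd sch vs rho hr t k [pk _] S st.
have sz0 i : 0 <= sz i by case/andP: (hsz i).
have Eq : events_upto a d sch t = [seq e <- sch | etime a d e <= t].
  by rewrite /events_upto take_count_sorted //; case: vs.
have I := Inv_steps sz0 a1 hd vs hr st (Inv_init sz alpha rho)
   (ex_intro _ (drop (count (fun e => etime a d e <= t) sch) sch) (esym (cat_take_drop _ _))).
case: I => CS PI gi.
have pres_t j : pres S j = present a d t j.
  rewrite PI /= Eq !mem_filter !(sch_all vs) !andbT /present /etime /= ltNge //.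
have hk : \sum_(i | pres S i) sz i <= k%:R.
  move: pk => /existsP [h /forallP hb].
  rewrite (eq_bigl (fun i => present a d t i)) => [|j]; last by rewrite pres_t.
  rewrite (partition_big h predT) //=.
  apply: le_trans (ler_sum _ (fun b _ => hb b)) _.
  by rewrite sumr_const card_ord.
have := count_bins sz0 a0 a1 CS hk.
have := @log_bound R _ _ gi.
lra.
Qed.
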